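(* For each $n\ge0$ there is an isomorphism of $A_n$-bimodules $D_{n+1}\otimes_{A_{n+1}}I_n\cong A_n$, and consequently an isomorphism of $A$-bimodules $D\otimes_A I\cong A$, where $A=\bigoplus_{n\ge0}A_n$, $D=\bigoplus_{n\ge0}D_{n+1}$ and $I=\bigoplus_{n\ge0}I_n$.
   Context: $A_n$ is the nilCoxeter algebra: the unital $\mathbb{Q}$-algebra generated by $Y_1,\dots,Y_{n-1}$ with relations $Y_i^2=0$, $Y_iY_j=Y_jY_i$ for $|i-j|>1$, $Y_iY_{i+1}Y_i=Y_{i+1}Y_iY_{i+1}$. Let $\chi_n:A_n\to A_{n+1}$, $\chi_n(Y_i)=Y_i$; $D_{n+1}$ is $A_{n+1}$ as an $(A_n,A_{n+1})$-bimodule (left action via $\chi_n$, right by multiplication). Let $t_{n+1}:A_{n+1}\to A_n$ be the algebra homomorphism with $t_{n+1}(Y_i)=Y_i$ for $i<n$ and $t_{n+1}(Y_n)=0$. $I_n$ is the $(A_{n+1},A_n)$-bimodule equal to $A_n$ as a right $A_n$-module, with left $A_{n+1}$-action via $t_{n+1}$. An $(A_n,A_k)$-bimodule is regarded as an $A$-bimodule on which $A_i$ acts by $0$ on the left for $i\neq n$ and on the right for $i\ne k$. *)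

(* Defs.v *)
From HB Require Import structures.
From mathcomp Require Import all_boot all_algebra.
Set Implicit Arguments. Unset Strict Implicit. Unset Printing Implicit Defensive.
Import GRing.Theory.
Local Open Scope ring_scope.

Definition is_QAlgHom (A B : algType rat) (f : A -> B) : Prop :=
  [/\ (forall x y, f (x + y) = f x + f y),
      (forall (c : rat) x, f (c *: x) = c *: f x),
      (forall x y, f (x * y) = f x * f y) & f 1 = 1].

Definition nilCoxeter_rels (n : nat) (B : algType rat) (y : nat -> B) : Prop :=
  [/\ (forall i, (0 < i < n)%N -> y i * y i = 0),
      (forall i j, (0 < i < n)%N -> (0 < j < n)%N -> (i.+1 < j)%N || (j.+1 < i)%N ->
                   y i * y j = y j * y i)
    & (forall i, (0 < i)%N -> (i.+1 < n)%N ->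
                 y i * y i.+1 * y i = y i.+1 * y i * y i.+1)].

(** (A, Y) is the nilCoxeter algebra A_n: the unital Q-algebra generated by
    Y 1, ..., Y (n-1) subject to the nilCoxeter relations, i.e. the initial
    object among Q-algebras with n-1 elements satisfying these relations. *)
Definition is_nilCoxeter (n : nat) (A : algType rat) (Y : nat -> A) : Prop :=
  nilCoxeter_rels n Y /\
  forall (B : algType rat) (y : nat -> B), nilCoxeter_rels n y ->
    exists! f : A -> B, is_QAlgHom f /\ forall i, (0 < i < n)%N -> f (Y i) = y i.

(** M is a right R-module
    (action [ract]), N a left R-module (action [lact]); the carriers are
    given by predicates inM, inN, inR (subgroups of ambient types).
    [is_tensor_product ... beta] says that [beta : M x N -> P] is biadditive,
    R-balanced and universal among such maps into abelian groups, i.e. that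
    the induced map M (x)_R N -> P is an isomorphism of abelian groups. *)
Definition is_tensor_product (R M N P : Type)
    (inR : R -> Prop) (inM : M -> Prop) (inN : N -> Prop) (inP : P -> Prop)
    (addM : M -> M -> M) (addN : N -> N -> N) (addP : P -> P -> P)
    (ract : M -> R -> M) (lact : R -> N -> N) (beta : M -> N -> P) : Prop :=
  [/\ (forall m n, inM m -> inN n -> inP (beta m n)),
      (forall m1 m2 n, inM m1 -> inM m2 -> inN n ->
         beta (addM m1 m2) n = addP (beta m1 n) (beta m2 n)),
      (forall m n1 n2, inM m -> inN n1 -> inN n2 ->
         beta m (addN n1 n2) = addP (beta m n1) (beta m n2)),
      (forall m r n, inM m -> inR r -> inN n -> beta (ract m r) n = beta m (lact r n))
    & (forall (Q : zmodType) (f : M -> N -> Q),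
         (forall m1 m2 n, inM m1 -> inM m2 -> inN n -> f (addM m1 m2) n = f m1 n + f m2 n) ->
         (forall m n1 n2, inM m -> inN n1 -> inN n2 -> f m (addN n1 n2) = f m n1 + f m n2) ->
         (forall m r n, inM m -> inR r -> inN n -> f (ract m r) n = f m (lact r n)) ->
         (exists g : P -> Q,
            (forall p1 p2, inP p1 -> inP p2 -> g (addP p1 p2) = g p1 + g p2) /\
            (forall m n, inM m -> inN n -> g (beta m n) = f m n)) /\
         (forall g1 g2 : P -> Q,
            (forall p1 p2, inP p1 -> inP p2 -> g1 (addP p1 p2) = g1 p1 + g1 p2) ->
            (forall p1 p2, inP p1 -> inP p2 -> g2 (addP p1 p2) = g2 p1 + g2 p2) ->
            (forall m n, inM m -> inN n -> g1 (beta m n) = f m n) ->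
            (forall m n, inM m -> inN n -> g2 (beta m n) = f m n) ->
            forall p, inP p -> g1 p = g2 p))].

(** Direct sums: elements of (+)_n F n are finitely supported families. *)
Definition finsupp (F : nat -> zmodType) (x : forall n, F n) : Prop :=
  exists N, forall n, (N <= n)%N -> x n = 0.

Definition dsadd (F : nat -> zmodType) (x y : forall n, F n) : forall n, F n :=
  fun n => x n + y n.

Definition dsmul (F : nat -> algType rat) (x y : forall n, F n) : forall n, F n :=
  fun n => x n * y n.

Definition shiftF (F : nat -> algType rat) : nat -> algType rat := fun n => F n.+1.

(* Main.v *)
Require Import Defs.
From HB Require Import structures.
From mathcomp Require Import all_boot all_algebra.
From Stdlib Require Import ClassicalEpsilon FunctionalExtensionality.
Import GRing.Theory.
Local Open Scope ring_scope.

Lemma comp_id (n:nat) (B C : algType rat) (Yb : nat -> B) (Yc : nat -> C)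
  (HB : is_nilCoxeter n Yb) (c : B -> C) (s : C -> B)
  (Hc: is_QAlgHom c) (Hs : is_QAlgHom s)
  (Hcy : forall i, (0<i<n)%N -> c (Yb i) = Yc i)
  (Hsy : forall i, (0<i<n)%N -> s (Yc i) = Yb i) : forall a, s (c a) = a.
Proof.
case: HB => rels univ. have [f [[Hf Hfy] Uf]] := univ B Yb rels.
have E1 : f = id.
  apply Uf; split; last by [].
  by split.
have E2 : f = s \o c.
  apply Uf; split.
  - case: Hc => c1 c2 c3 c4; case: Hs => s1 s2 s3 s4.
    split => [x y|k x|x y|] /=; by rewrite ?(c1,c2,c3,s1,s2,s3,c4,s4).
  - by move=> i hi /=; rewrite Hcy // Hsy.
move=> a; by have := congr1 (fun g => g a) (etrans (esym E1) E2).
Qed.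

Lemma hom0 (B C : algType rat) (s : B -> C) : is_QAlgHom s -> s 0 = 0.
Proof.
case=> s1 _ _ _. have h := s1 0 0. rewrite addr0 in h.
apply/(addrI (s 0)). by rewrite addr0 -h.
Qed.

Lemma homIf (B C : algType rat) (s : B -> C) (b : bool) : is_QAlgHom s ->
  s (if b then 1 else 0) = if b then 1 else 0.
Proof. move=> hs; case: b; [by case: hs | exact: hom0]. Qed.

Theorem mainTheorem11
  (A : nat -> algType rat) (Y : forall n, nat -> A n)
  (HA : forall n, is_nilCoxeter n (Y n))
  (chi : forall n, A n -> A n.+1)
  (Hchi : forall n, is_QAlgHom (chi n) /\
            forall i, (0 < i < n)%N -> chi n (Y n i) = Y n.+1 i)
  (t : forall n, A n.+1 -> A n)
  (Ht : forall n, [/\ is_QAlgHom (t n),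
            (forall i, (0 < i < n)%N -> t n (Y n.+1 i) = Y n i)
          & ((0 < n)%N -> t n (Y n.+1 n) = 0)]) :
  (* D_{n+1} (x)_{A_{n+1}} I_n ~= A_n as A_n-bimodules *)
  (forall n, exists beta : A n.+1 -> A n -> A n,
     [/\ is_tensor_product (fun _ : A n.+1 => True) (fun _ : A n.+1 => True)
           (fun _ : A n => True) (fun _ : A n => True)
           +%R +%R +%R
           (fun (d r : A n.+1) => d * r)          (* right A_{n+1}-action on D_{n+1} *)
           (fun (r : A n.+1) (x : A n) => t n r * x) (* left A_{n+1}-action on I_n *)
           beta,
         (forall (a : A n) (d : A n.+1) (x : A n), beta (chi n a * d) x = a * beta d x)
       & (forall (d : A n.+1) (x a : A n), beta d (x * a) = beta d x * a)]) /\
  (* D (x)_A I ~= A as A-bimodules, A = (+)_n A_n, D = (+)_n D_{n+1}, I = (+)_n I_n *)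
  (exists beta : (forall n, A n.+1) -> (forall n, A n) -> (forall n, A n),
     [/\ is_tensor_product (@finsupp A) (@finsupp (shiftF A)) (@finsupp A) (@finsupp A)
           (@dsadd (shiftF A)) (@dsadd A) (@dsadd A)
           (fun (d : forall n, A n.+1) (r : forall n, A n) => fun n => d n * r n.+1)
           (fun (r : forall n, A n) (x : forall n, A n) => fun n => t n (r n.+1) * x n)
           beta,
         (forall (a : forall n, A n) (d : forall n, A n.+1) (x : forall n, A n),
            finsupp a -> @finsupp (shiftF A) d -> finsupp x ->
            beta (fun n => chi n (a n) * d n) x = dsmul a (beta d x))
       & (forall (d : forall n, A n.+1) (x a : forall n, A n),
            @finsupp (shiftF A) d -> finsupp x -> finsupp a ->
            beta d (fun n => x n * a n) = dsmul (beta d x) a)]).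
Proof.
have tA : forall n, is_QAlgHom (t n) by move=> n; case: (Ht n).
have tchi : forall n a, t n (chi n a) = a.
  move=> n; apply: (@comp_id n _ _ (Y n) (Y n.+1) (HA n) (chi n) (t n) (Hchi n).1 (tA n) (Hchi n).2).
  by case: (Ht n).
split.
  move=> n; case: (tA n) => t1 t2 t3 t4.
  exists (fun d x => t n d * x); split.
  - split.
    + by [].
    + by move=> m1 m2 x _ _ _; rewrite t1 mulrDl.
    + by move=> m x1 x2 _ _ _; rewrite mulrDr.
    + by move=> m r x _ _ _; rewrite t3 mulrA.
    + move=> Q f fa1 fa2 fb; split.
      * exists (fun p => f 1 p); split.
          by move=> p1 p2 _ _; exact: fa2.
        by move=> m x _ _ /=; rewrite -fb // mul1r.
      * move=> g1 g2 _ _ h1 h2 p _.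
        have ->: p = t n 1 * p by rewrite t4 mul1r.
        by rewrite h1 // h2.
  - by move=> a d x; rewrite t3 tchi mulrA.
  - by move=> d x a; rewrite mulrA.

pose bnd (F : nat -> algType rat) (p : forall n, F n) N := forall n, (N <= n)%N -> p n = 0.
pose E N : forall n, A n.+1 := fun n => if (n < N)%N then 1 else 0.
pose R N : forall n, A n := fun n => if (n <= N)%N then 1 else 0.
have finE : forall N, @finsupp (shiftF A) (E N).
  by move=> N; exists N => k h; rewrite /E ltnNge h.
have finR : forall N, finsupp (R N).
  by move=> N; exists N.+1 => k h; rewrite /R leqNgt h.
have bndmono : forall (F : nat -> algType rat) (p : forall n, F n) N M,
    bnd F p N -> (N <= M)%N -> bnd F p M.
  by move=> F p N M h hNM k hk; apply: h; apply: leq_trans hk.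
have lactR : forall N (p : forall n, A n), bnd A p N ->
    (fun n => t n (R N n.+1) * p n) = p.
  move=> N p hp; apply: functional_extensionality_dep => k /=.
  rewrite homIf //; case: (ltnP k N) => h; first by rewrite mul1r.
  by rewrite mul0r hp.
have ractE : forall M N, (fun n => E M n * R N n.+1) = E (minn M N).
  move=> M N; apply: functional_extensionality_dep => k /=.
  rewrite /E /R leq_min; case: (k < M)%N; case: (k < N)%N => /=;
    by rewrite ?mulr1 ?mulr0.
exists (fun d x n => t n (d n) * x n); split.
- split.
  + move=> d x _ [N hN]; exists N => k hk; by rewrite hN // mulr0.
  + move=> m1 m2 x _ _ _; apply: functional_extensionality_dep => k.
    by rewrite /dsadd /=; case: (tA k) => t1 _ _ _; rewrite t1 mulrDl.
  + move=> m x1 x2 _ _ _; apply: functional_extensionality_dep => k.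
    by rewrite /dsadd /= mulrDr.
  + move=> m r x _ _ _; apply: functional_extensionality_dep => k /=.
    by case: (tA k) => _ _ t3 _; rewrite t3 mulrA.
  + move=> Q f fa1 fa2 fb.
    have L : forall p N M, finsupp p -> bnd A p N -> bnd A p M -> f (E M) p = f (E N) p.
      move=> p N M fp hN hM.
      have h1 : f (E M) p = f (E (minn M N)) p.
        by rewrite -{1}(lactR N p hN) -fb // ractE.
      have h2 : f (E N) p = f (E (minn N M)) p.
        by rewrite -{1}(lactR M p hM) -fb // ractE.
      by rewrite h1 h2 minnC.
    pose Nof (p : forall n, A n) := epsilon (inhabits 0%N) (bnd A p).
    have NofP : forall p, finsupp p -> bnd A p (Nof p).
      by move=> p fp; apply: (epsilon_spec (inhabits 0%N) (bnd A p)).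
    split.
    * exists (fun p => f (E (Nof p)) p); split.
        move=> p1 p2 f1 f2.
        have f12 : finsupp (dsadd p1 p2).
          case: f1 => N1 h1; case: f2 => N2 h2; exists (maxn N1 N2) => k hk.
          rewrite /dsadd h1 ?h2 ?addr0 //; apply: leq_trans hk;
            by rewrite ?leq_maxl ?leq_maxr.
        pose K := maxn (Nof p1) (Nof p2).
        have b1 : bnd A p1 K by apply: bndmono (NofP _ f1) (leq_maxl _ _).
        have b2 : bnd A p2 K by apply: bndmono (NofP _ f2) (leq_maxr _ _).
        have b12 : bnd A (dsadd p1 p2) K.
          by move=> k hk; rewrite /dsadd b1 // b2 // addr0.
        rewrite (L _ K _ f12 b12 (NofP _ f12)) fa2 //.
        by rewrite (L _ _ K f1 (NofP _ f1) b1) (L _ _ K f2 (NofP _ f2) b2).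
      move=> d x fd fx.
      have fp : finsupp (fun n => t n (d n) * x n).
        case: fx => N hN; exists N => k hk; by rewrite hN // mulr0.
      case: fd => Nd hd.
      pose K := maxn (Nof (fun n => t n (d n) * x n)) Nd.
      have bK : bnd A (fun n => t n (d n) * x n) K.
        by apply: bndmono (NofP _ fp) (leq_maxl _ _).
      rewrite /= (L _ K _ fp bK (NofP _ fp)).
      pose D' : forall n, A n := fun n => match n with 0%N => 0 | k.+1 => d k end.
      have fD : finsupp D'.
        exists Nd.+1 => -[|k] hk //; exact: hd.
      have -> : (fun n => t n (d n) * x n) = (fun n => t n (D' n.+1) * x n) by [].
      rewrite -fb //.
      have -> : (fun n => E K n * D' n.+1) = d; last by [].
      apply: functional_extensionality_dep => k /=.
      rewrite /E; case: (ltnP k K) => h; first by rewrite mul1r.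
      rewrite mul0r hd //; apply: leq_trans h; exact: leq_maxr.
    * move=> g1 g2 _ _ h1 h2 p [N hN].
      have -> : p = (fun n => t n (E N n) * p n).
        apply: esym; apply: functional_extensionality_dep => k /=.
        rewrite homIf //; case: (ltnP k N) => h; first by rewrite mul1r.
        by rewrite mul0r hN.
      by rewrite h1 ?h2 //; exists N.
- move=> a d x _ _ _; apply: functional_extensionality_dep => k.
  by rewrite /dsmul /=; case: (tA k) => _ _ t3 _; rewrite t3 tchi mulrA.
- move=> d x a _ _ _; apply: functional_extensionality_dep => k.
  by rewrite /dsmul /= mulrA.
Qed.
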